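(* Let $n$ be a prime, let $\alpha$ be a primitive element of $\mathbb{F}_{2^n}$, identify $\mathbb{F}_2^n$ with $\mathbb{F}_{2^n}$ as $\mathbb{F}_2$-vector spaces, and let $k\ge 2$. If there exist $\frac{2^n-2}{(2^k-1)(2^k-2)}$ pairwise disjoint complete $k$-dimensional subspaces of $\mathbb{F}_2^n$, then there exists a Steiner structure $\mathbb{S}_2[2,k,n]$.
   Context: For a $k$-dimensional subspace $X=\{0,\alpha^{i_1},\dots,\alpha^{i_{2^k-1}}\}$ of $\mathbb{F}_2^n$ (exponents in $\mathbb{Z}_{2^n-1}$), its difference set is $\Delta(X)=\{i_r-i_s \bmod (2^n-1): 1\le r,s\le 2^k-1,\ r\ne s\}$. $X$ is complete if $|\Delta(X)|=(2^k-1)(2^k-2)$. Two complete subspaces $X,Y$ are disjoint complete if $\Delta(X)\cap\Delta(Y)=\varnothing$. A Steiner structure $\mathbb{S}_2[2,k,n]$ is a set of $k$-dimensional subspaces of $\mathbb{F}_2^n$ such that each $2$-dimensional subspace of $\mathbb{F}_2^n$ is contained in exactly one of them. *)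

(* Defs.v *)
From HB Require Import structures.
From mathcomp Require Import all_boot all_order all_algebra all_fingroup all_field.
Set Implicit Arguments. Unset Strict Implicit. Unset Printing Implicit Defensive.
Import GRing.Theory.
Local Open Scope ring_scope.

Section Defs.
Variables (F : finFieldType) (n : nat) (alpha : F).

(* Exponents live in Z_{2^n-1}; for x <> 0, dlog x is the unique i with
   alpha^i = x (alpha primitive).  Value for x = 0 is irrelevant. *)
Definition dlog (x : F) : 'Z_(2 ^ n - 1) :=
  odflt 0 [pick i : 'Z_(2 ^ n - 1) | alpha ^+ i == x].

Definition diffset (X : {set F}) : {set 'Z_(2 ^ n - 1)} :=
  [set dlog x - dlog y | x in X, y in X & [&& x != 0, y != 0 & x != y]].

(* F_2-subspace of F (viewed as F_2^n): contains 0 and closed under addition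
   (scalars in F_2 = {0,1} act trivially); dimension k <=> 2^k elements. *)
Definition is_F2subspace (X : {set F}) : bool :=
  (0 \in X) && [forall x in X, forall y in X, x + y \in X].

Definition ksubspace (k : nat) (X : {set F}) : bool :=
  is_F2subspace X && (#|X| == 2 ^ k)%N.

Definition complete (k : nat) (X : {set F}) : bool :=
  ksubspace k X && (#|diffset X| == (2 ^ k - 1) * (2 ^ k - 2))%N.

Definition disjoint_complete (k : nat) (X Y : {set F}) : bool :=
  [&& complete k X, complete k Y & diffset X :&: diffset Y == set0].

Definition steiner_structure (k : nat) (S : {set {set F}}) : Prop :=
  (forall X, X \in S -> ksubspace k X) /\
  (forall Y, ksubspace 2 Y -> #|[set X in S | Y \subset X]| = 1%N).

End Defs.

(* Main.v *)
Require Import Defs.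
From HB Require Import structures.
From mathcomp Require Import all_boot all_order all_algebra all_fingroup all_field.
From mathcomp Require Import zify.
Import GRing.Theory.
Local Open Scope ring_scope.
Set Implicit Arguments. Unset Strict Implicit. Unset Printing Implicit Defensive.

Section Aux.
Variables (F : finFieldType) (n : nat) (alpha : F).
Hypothesis n_gt1 : (1 < n)%N.
Hypothesis cardF : #|F| = (2 ^ n)%N.
Hypothesis prim : (2 ^ n - 1)%N.-primitive_root alpha.

Lemma N_gt1 : (1 < 2 ^ n - 1)%N.
Proof.
have : (2 ^ 2 <= 2 ^ n)%N by rewrite leq_exp2l.
rewrite expnS expn1 => h. lia.
Qed.

Lemma Ncast : (Zp_trunc (2 ^ n - 1)).+2 = (2 ^ n - 1)%N.
Proof. exact: Zp_cast N_gt1. Qed.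

Lemma expZ_inj (i j : 'Z_(2 ^ n - 1)) : alpha ^+ i = alpha ^+ j -> i = j.
Proof.
move/eqP; rewrite (eq_prim_root_expr prim) => /eqP h.
apply: val_inj => /=.
have hi : (i < 2^n-1)%N := leq_trans (ltn_ord i) (eq_leq Ncast).
have hj : (j < 2^n-1)%N := leq_trans (ltn_ord j) (eq_leq Ncast).
by move: h; rewrite !modn_small.
Qed.

Lemma expZD (i j : 'Z_(2 ^ n - 1)) : alpha ^+ (i + j)%R = alpha ^+ i * alpha ^+ j.
Proof.
have -> : nat_of_ord (i + j)%R = ((i + j) %% (Zp_trunc (2 ^ n - 1)).+2)%N by [].
by rewrite [X in (_ %% X)%N]Ncast (prim_expr_mod prim) exprD.
Qed.

Lemma unit_pow (x : F) : x != 0 -> x ^+ (2 ^ n - 1) = 1.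
Proof.
move=> x0; have := expf_card x; rewrite cardF.
have -> : (2 ^ n = (2 ^ n - 1).+1)%N by have := N_gt1; lia.
rewrite exprSr => h; apply: (mulIf x0); by rewrite mul1r subSS subn0.
Qed.

Lemma dlogP (x : F) : x != 0 -> alpha ^+ (dlog n alpha x) = x.
Proof.
move=> x0; rewrite /dlog; case: pickP => [i /eqP //|/= H].
have [i hi] := prim_rootP prim (unit_pow x0).
have := H (inZp i); rewrite /= [X in (_ %% X)%N]Ncast (prim_expr_mod prim) -hi eqxx //.
Qed.

Lemma dlog_inj (x y : F) : x != 0 -> y != 0 -> dlog n alpha x = dlog n alpha y -> x = y.
Proof. by move=> x0 y0 e; rewrite -(dlogP x0) -(dlogP y0) e. Qed.

Lemma dlog_div (x y : F) : x != 0 -> y != 0 ->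
  (dlog n alpha x - dlog n alpha y)%R = dlog n alpha (x / y).
Proof.
move=> x0 y0; apply: expZ_inj.
rewrite dlogP ?mulf_neq0 ?invr_eq0 //.
apply: (mulIf y0); rewrite -mulrA mulVf // mulr1.
rewrite -{2}(dlogP y0) -expZD subrK dlogP //.
Qed.

Lemma dlog_eq0 (x : F) : x != 0 -> dlog n alpha x = 0 -> x = 1.
Proof. by move=> x0 e; rewrite -(dlogP x0) e. Qed.


Definition pairs (X : {set F}) : {set F * F} :=
  [set p | [&& p.1 \in X, p.2 \in X, p.1 != 0, p.2 != 0 & p.1 != p.2]].

Definition rat (p : F * F) := dlog n alpha (p.1 / p.2).

Lemma diffsetE X : diffset n alpha X = rat @: pairs X.
Proof.
apply/setP => d; apply/imset2P/imsetP.
  case=> x y xX; rewrite inE => /and4P[yX x0 y0 xy] ->.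
  exists (x, y); first by rewrite inE /= xX yX x0 y0 xy.
  by rewrite /rat /= dlog_div.
case=> [[x y]]; rewrite inE /= => /and5P[xX yX x0 y0 xy] ->.
exists x y => //; first by rewrite inE yX x0 y0 xy.
by rewrite /rat /= dlog_div.
Qed.

Lemma card_pairs X k : ksubspace k X -> (#|pairs X| <= (2 ^ k - 1) * (2 ^ k - 2))%N.
Proof.
case/andP=> /andP[X0 _] /eqP cX.
set X' := X :\ 0.
have cX' : #|X'| = (2 ^ k - 1)%N by have := cardsD1 0 X; rewrite X0 cX /= add1n; move=> ->; rewrite subn1.
set D := [set (x, x) | x in X'].
have cD : #|D| = #|X'| by apply: card_imset => a b [].
have sub : pairs X \subset setX X' X' :\: D.
  apply/subsetP => [[x y]]; rewrite !inE /= => /and5P[xX yX x0 y0 xy].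
  rewrite xX yX x0 y0 andbT /= andbT; apply/imsetP => [[z _ [e1 e2]]].
  by move: xy; rewrite e1 e2 eqxx.
apply: (leq_trans (subset_leq_card sub)).
rewrite cardsD cardsX.
have -> : setX X' X' :&: D = D.
  apply/setIidPr/subsetP => p /imsetP[z zX ->]; by rewrite inE /= zX.
rewrite cD cX'.
have -> : (2 ^ k - 2 = (2 ^ k - 1) - 1)%N by lia.
move: (2 ^ k - 1)%N => m; by rewrite mulnBr muln1.
Qed.

Lemma complete_inj X k : complete n alpha k X -> {in pairs X &, injective rat}.
Proof.
case/andP=> kX /eqP cD; apply/imset_injP; rewrite -diffsetE cD eqn_leq.
rewrite card_pairs //=; have := leq_imset_card rat (pairs X).
by rewrite -diffsetE cD => ->.
Qed.


Lemma diffset_nz X : 0 \notin diffset n alpha X.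
Proof.
rewrite diffsetE; apply/imsetP => [[[x y]]]; rewrite inE /= => /and5P[_ _ x0 y0 xy].
rewrite /rat /= => /esym/dlog_eq0; rewrite mulf_neq0 ?invr_eq0 // => /(_ isT).
by move/divr1_eq => e; move: xy; rewrite e eqxx.
Qed.

Lemma cover_all k (C : {set {set F}}) : (2 <= k)%N ->
  (#|C| * ((2 ^ k - 1) * (2 ^ k - 2)) = 2 ^ n - 2)%N ->
  (forall X, X \in C -> complete n alpha k X) ->
  (forall X Y, X \in C -> Y \in C -> X != Y -> disjoint_complete n alpha k X Y) ->
  forall d, d != 0 -> exists2 X, X \in C & d \in diffset n alpha X.
Proof.
move=> k2 hC hcomp hdisj d d0.
set Q := diffset n alpha @: C.
have cD X : X \in C -> #|diffset n alpha X| = ((2 ^ k - 1) * (2 ^ k - 2))%N.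
  by move/hcomp => /andP[_ /eqP].
have Dne X : X \in C -> diffset n alpha X != set0.
  move=> XC; rewrite -card_gt0 cD //.
  have : (2 ^ 2 <= 2 ^ k)%N by rewrite leq_exp2l.
  rewrite expnS expn1 => h; rewrite muln_gt0; apply/andP; split; lia.
have injD : {in C &, injective (diffset n alpha)}.
  move=> X Y XC YC e; apply/eqP; apply/negPn/negP => nXY.
  case/and3P: (hdisj X Y XC YC nXY) => _ _; rewrite e setIid => e0.
  by move: (Dne Y YC); rewrite e0.
have tQ : trivIset Q.
  apply/trivIsetP => A B /imsetP[X XC ->] /imsetP[Y YC ->] nAB.
  have nXY : X != Y by apply: contraNneq nAB => ->.
  by case/and3P: (hdisj X Y XC YC nXY) => _ _; rewrite setI_eq0.
have cQ : #|cover Q| = (2 ^ n - 2)%N.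
  rewrite -(eqP tQ) big_imset //= -hC -sum_nat_const.
  by apply: eq_bigr => X XC; rewrite cD.
have sub : cover Q \subset [set~ 0].
  apply/subsetP => e /bigcupP[B /imsetP[X XC ->] eB]; rewrite !inE.
  by apply: contraNneq (diffset_nz X) => <-.
have eqQ : cover Q = [set~ 0].
  have cZ : #|'Z_(2 ^ n - 1)| = (2 ^ n - 1)%N by rewrite card_ord; exact: Ncast.
  apply/eqP; rewrite eqEcard sub cardsC1 cZ cQ.
  have := N_gt1; lia.
have : d \in cover Q by rewrite eqQ !inE.
by case/bigcupP => B /imsetP[X XC ->] dB; exists X.
Qed.

End Aux.

Lemma scale_ksub (F : finFieldType) k (X : {set F}) c :
  ksubspace k X -> c != 0 -> ksubspace k [set c * v | v in X].
Proof.
case/andP=> /andP[X0 /forall_inP Xadd] /eqP cX c0.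
apply/andP; split; last by rewrite card_imset ?cX //; exact: mulfI.
apply/andP; split; first by apply/imsetP; exists 0 => //; rewrite mulr0.
apply/forall_inP => u /imsetP[a aX ->]; apply/forall_inP => w /imsetP[b bX ->].
rewrite -mulrDr; apply: imset_f.
by have := Xadd a aX => /forall_inP; apply.
Qed.

Theorem theorem1 (n : nat) (F : finFieldType) (alpha : F) (k : nat) :
  prime n ->
  #|F| = (2 ^ n)%N ->
  (2 ^ n - 1)%N.-primitive_root alpha ->
  (2 <= k)%N ->
  (exists C : {set {set F}},
      (#|C| * ((2 ^ k - 1) * (2 ^ k - 2)) = 2 ^ n - 2)%N /\
      (forall X, X \in C -> complete n alpha k X) /\
      (forall X Y, X \in C -> Y \in C -> X != Y -> disjoint_complete n alpha k X Y)) ->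
  exists S : {set {set F}}, steiner_structure k S.
Proof.
move=> pn cF prim k2 [C [hC [hcomp hdisj]]].
have n1 := prime_gt1 pn.
have char2 (a : F) : a + a = 0.
  have h2 : (2%:R : F) = 0 by apply: pcharf0; apply: (card_finPcharP cF).
  by rewrite -mulr2n -mulr_natr h2 mulr0.
set S := [set Z : {set F} | [exists X in C, exists c : F,
                (c != 0) && (Z == [set c * v | v in X])]].
exists S; split.
  move=> Z; rewrite inE => /exists_inP[X XC /existsP[c /andP[c0 /eqP ->]]].
  by apply: scale_ksub => //; case/andP: (hcomp X XC).
move=> Y /andP[/andP[Y0 /forall_inP Yadd] /eqP cY].
have Yadd' u w : u \in Y -> w \in Y -> u + w \in Y.
  by move=> uY wY; have := Yadd u uY => /forall_inP; apply.
have c1 : #|Y :\ 0| = 3%N by have := cardsD1 0 Y; rewrite Y0 cY /= add1n => -[].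
have /card_gt0P[x] : (0 < #|Y :\ 0%R|)%N by rewrite c1.
rewrite !inE => /andP[x0 xY].
have c2 : #|Y :\ 0 :\ x| = 2%N.
  by have := cardsD1 x (Y :\ (0 : F)); rewrite !inE x0 xY c1 /= add1n => -[].
have /card_gt0P[y] : (0 < #|Y :\ 0%R :\ x|)%N by rewrite c2.
rewrite !inE => /and3P[yx y0 yY].
have xy : x != y by rewrite eq_sym.
have s0 : x + y != 0.
  apply: contra xy => /eqP e; apply/eqP; apply: (addrI x); by rewrite e char2.
have sx : x + y != x by rewrite -{2}[x]addr0 (inj_eq (addrI x)).
have sy : x + y != y by rewrite -{2}[y]add0r (inj_eq (addIr y)).
have eY : Y = [set 0; x; y; x + y].
  apply/eqP; rewrite eq_sym eqEcard cY; apply/andP; split.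
    apply/subsetP => w; rewrite !inE -!orbA; case/or4P => /eqP ->; rewrite ?Yadd' //.
  have -> : [set 0; x; y; x + y] = 0 |: (x |: (y |: [set x + y])).
    by apply/setP => w; rewrite !inE !orbA.
  rewrite !cardsU1 cards1 !inE !(eq_sym (0 : F)) (eq_sym x (x + y)) (eq_sym y (x + y)).
  by rewrite (negbTE x0) (negbTE y0) (negbTE s0) (negbTE xy) (negbTE sx) sy.
have xy0 : x / y != 0 by rewrite mulf_neq0 ?invr_eq0.
have d0 : dlog n alpha (x / y) != 0.
  apply/eqP => /(dlog_eq0 n1 cF prim xy0) /divr1_eq e.
  by move: xy; rewrite e eqxx.
have [X XC dX] := cover_all n1 cF prim k2 hC hcomp hdisj d0.
case/andP: (hcomp X XC) => /andP[/andP[X0 /forall_inP Xadd] _] _.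
move: (dX); rewrite (diffsetE n1 cF prim) => /imsetP[[a b]].
rewrite inE /= => /and5P[aX bX a0 b0 ab] eab.
have ab0 : a / b != 0 by rewrite mulf_neq0 ?invr_eq0.
have e1 : a / b = x / y by apply: (dlog_inj n1 cF prim ab0 xy0); rewrite eab.
set c := y / b.
have c0 : c != 0 by rewrite mulf_neq0 ?invr_eq0.
set Z0 := [set c * v | v in X].
have Z0S : Z0 \in S.
  rewrite inE; apply/exists_inP; exists X => //; apply/existsP; exists c.
  by rewrite c0 eqxx.
have cb : c * b = y by rewrite /c divfK.
have ca : c * a = x.
  by rewrite /c -mulrA [b^-1 * a]mulrC e1 mulrC divfK.
have YZ0 : Y \subset Z0.
  rewrite eY; apply/subsetP => w; rewrite !inE -!orbA.
  case/or4P => /eqP ->; apply/imsetP.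
  - by exists 0; rewrite ?mulr0.
  - by exists a.
  - by exists b.
  exists (a + b); last by rewrite mulrDr ca cb.
  by have := Xadd a aX => /forall_inP; apply.
apply/eqP/cards1P; exists Z0; apply/setP => Z; rewrite !inE.
apply/andP/eqP; last first.
  by move=> ->; split => //; move: Z0S; rewrite inE.
case=> ZS YZ.
move: ZS; rewrite ?inE => /exists_inP[X' X'C /existsP[c' /andP[c'0 /eqP eZ]]].
have xZ : x \in Z by apply: (subsetP YZ); rewrite eY !inE eqxx !orbT.
have yZ : y \in Z by apply: (subsetP YZ); rewrite eY !inE eqxx !orbT.
rewrite eZ in xZ yZ.
case/imsetP: xZ => a' a'X ea'; case/imsetP: yZ => b' b'X eb'.
have a'0 : a' != 0 by apply: contraNneq x0 => e; rewrite ea' e mulr0.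
have b'0 : b' != 0 by apply: contraNneq y0 => e; rewrite eb' e mulr0.
have a'b' : a' != b' by apply: contraNneq xy => e; rewrite ea' eb' e.
have e2 : a' / b' = x / y by rewrite ea' eb' -mulf_div divff // mul1r.
have P1 : (a', b') \in pairs X' by rewrite inE /= a'X b'X a'0 b'0 a'b'.
have P2 : (a, b) \in pairs X by rewrite inE /= aX bX a0 b0 ab.
have dX' : dlog n alpha (x / y) \in diffset n alpha X'.
  rewrite (diffsetE n1 cF prim); apply/imsetP; exists (a', b') => //.
  by rewrite /rat /= e2.
have XX' : X' = X.
  apply/eqP; apply/negPn/negP => nX.
  case/and3P: (hdisj X' X X'C XC nX) => _ _ /eqP I0.
  have : dlog n alpha (x / y) \in diffset n alpha X' :&: diffset n alpha X.
    by rewrite inE dX' dX.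
  by rewrite I0 inE.
subst X'.
have pe : (a', b') = (a, b).
  apply: (complete_inj n1 cF prim (hcomp X XC) P1 P2).
  by rewrite /rat /= e2 e1.
case: pe => ea eb.
have cc : c' = c.
  apply: (mulIf b0); rewrite cb -{1}eb -eb' //.
by rewrite eZ cc.
Qed.
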